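(* Let $R$ be a set, $\mathcal{G}:(\mathbf{1},R)\rightarrow(Y,R)$ an object of $\mathrm{2Open}_R$, and $\mathcal{G}_\omega$ its $\omega$-iteration. Then $\mathcal{G}_\omega$, with coalgebra map $(\langle\mathrm{now},\mathrm{ltr}\rangle,\langle\mathrm{hd},\mathrm{tl}\rangle):\mathcal{G}_\omega\rightarrow F_\mathcal{G}\mathcal{G}_\omega$, is a final $F_\mathcal{G}$-coalgebra: for every $F_\mathcal{G}$-coalgebra $\gamma:\mathcal{H}\rightarrow F_\mathcal{G}\mathcal{H}$ there is a unique morphism $\beta:\mathcal{H}\rightarrow\mathcal{G}_\omega$ in $\mathrm{2Open}_R$ with $(\langle\mathrm{now},\mathrm{ltr}\rangle,\langle\mathrm{hd},\mathrm{tl}\rangle)\circ\beta=F_\mathcal{G}(\beta)\circ\gamma$.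
   Context: Fix a set $R$. Objects of $\mathrm{2Open}_R$ are open games $\mathcal{H}:(\mathbf{1},R)\rightarrow(Y_\mathcal{H},R)$ given by a strategy set $\Sigma_\mathcal{H}$, a move set $Y_\mathcal{H}$, a play function $P_\mathcal{H}:\Sigma_\mathcal{H}\rightarrow Y_\mathcal{H}$, an equilibrium function $E_\mathcal{H}:(Y_\mathcal{H}\rightarrow R)\rightarrow\mathcal{P}\Sigma_\mathcal{H}$, and identity coutility $C\,\sigma\,r=r$. A morphism $\beta:\mathcal{H}\rightarrow\mathcal{H}'$ is a pair $\beta_Y:Y_\mathcal{H}\rightarrow Y_{\mathcal{H}'}$, $\beta_\Sigma:\Sigma_\mathcal{H}\rightarrow\Sigma_{\mathcal{H}'}$ with $\beta_Y(P_\mathcal{H}\sigma)=P_{\mathcal{H}'}(\beta_\Sigma\sigma)$ for all $\sigma$, and such that for all $\sigma\in\Sigma_\mathcal{H}$ and $k:Y_{\mathcal{H}'}\rightarrow R$, $\sigma\in E_\mathcal{H}(k\circ\beta_Y)$ implies $\beta_\Sigma(\sigma)\in E_{\mathcal{H}'}(k)$; composition is componentwise. For the fixed $\mathcal{G}$ (data $\Sigma_\mathcal{G},Y,P_\mathcal{G},E_\mathcal{G}$), the functor $F_\mathcal{G}:\mathrm{2Open}_R\rightarrow\mathrm{2Open}_R$ sends $\mathcal{H}$ to the composite game $(Y\rightarrow\mathcal{H})\circ\mathcal{G}$, explicitly: strategies $\Sigma_\mathcal{G}\times(Y\rightarrow\Sigma_\mathcal{H})$, moves $Y\times Y_\mathcal{H}$,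 play $P(\sigma,f)=(P_\mathcal{G}\sigma,P_\mathcal{H}(f(P_\mathcal{G}\sigma)))$, identity coutility, and $(\sigma,f)\in E_{F_\mathcal{G}\mathcal{H}}(k)$ iff $\sigma\in E_\mathcal{G}(\lambda y.\,k(y,P_\mathcal{H}(f\,y)))$ and $f(y')\in E_\mathcal{H}(\lambda z.\,k(y',z))$ for all $y'\in Y$; on a morphism $\beta$, $(F_\mathcal{G}\beta)_\Sigma(\sigma,f)=(\sigma,\beta_\Sigma\circ f)$ and $(F_\mathcal{G}\beta)_Y(y,z)=(y,\beta_Y z)$. An $F_\mathcal{G}$-coalgebra is an object $\mathcal{H}$ with a morphism $\gamma:\mathcal{H}\rightarrow F_\mathcal{G}\mathcal{H}$. Notation: $Y^*$ finite words over $Y$, $\epsilon$ the empty word, $Y^\omega$ infinite streams over $Y$, $y\mathrel{::}w$ prepending, $\mathrm{hd}(y_0y_1\dots)=y_0$, $\mathrm{tl}(y_0y_1y_2\dots)=y_1y_2\dots$. For $\sigma:Y^*\rightarrow\Sigma_\mathcal{G}$, $\sigma_0=\mathrm{now}(\sigma)=\sigma(\epsilon)$ and $\sigma'=\mathrm{ltr}(\sigma)=\lambda y.\lambda w.\,\sigma(yw)$. The $\omega$-iteration $\mathcal{G}_\omega:(\mathbf{1},R)\rightarrow(Y^\omega,R)$ has strategies $\Sigma_\omega=Y^*\rightarrow\Sigma_\mathcal{G}$, moves $Y^\omega$, identity coutility, play function $P_\omega$ the unique function with $P_\omega\sigma=P_\mathcal{G}\sigma_0\mathrel{::}P_\omega(\lambda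 z.\,\sigma(P_\mathcal{G}\sigma_0\mathrel{::}z))$, and equilibrium function $E_\omega$ the greatest fixed point of the monotone operator $\Phi$ on $(\mathcal{P}\Sigma_\omega)^{(Y^\omega\rightarrow R)}$ (ordered pointwise by inclusion) given by: $\sigma\in\Phi(\Gamma)(k)$ iff $\sigma_0\in E_\mathcal{G}(\lambda y.\,k(y\mathrel{::}P_\omega(\sigma'y)))$ and for all $y'\in Y$, $\sigma'y'\in\Gamma(\lambda z.\,k(y'\mathrel{::}z))$. *)

(* Defs.v *)
From Stdlib Require Import List.
Import ListNotations.
Set Implicit Arguments.

(* An object H : (1,R) -> (Y_H,R) of 2Open_R.  The coutility is the identity,
   so it is not recorded.  Subsets P(Sigma) are predicates Sigma -> Prop. *)
Record Game (R : Type) := mkGame {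
  Sig : Type;
  Mov : Type;
  play : Sig -> Mov;
  eqm : (Mov -> R) -> Sig -> Prop
}.
Arguments Sig {R}. Arguments Mov {R}. Arguments play {R}. Arguments eqm {R}.

Definition is_morphism {R : Type} (H H' : Game R)
  (bY : Mov H -> Mov H') (bS : Sig H -> Sig H') : Prop :=
  (forall s, bY (play H s) = play H' (bS s)) /\
  (forall (s : Sig H) (k : Mov H' -> R),
      eqm H (fun y => k (bY y)) s -> eqm H' k (bS s)).

(* The functor F_G on objects: the composite game (Y -> H) o G. *)
Definition FG {R : Type} (G H : Game R) : Game R :=
  @mkGame R (Sig G * (Mov G -> Sig H)) (Mov G * Mov H)
    (fun p => let (s, f) := p in (play G s, play H (f (play G s))))
    (fun k p => let (s, f) := p in
       eqm G (fun y => k (y, play H (f y))) s /\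
       forall y', eqm H (fun z => k (y', z)) (f y')).

Definition FG_mapS {R : Type} (G H H' : Game R) (bS : Sig H -> Sig H')
  (p : Sig (FG G H)) : Sig (FG G H') := (fst p, fun y => bS (snd p y)).
Definition FG_mapY {R : Type} (G H H' : Game R) (bY : Mov H -> Mov H')
  (p : Mov (FG G H)) : Mov (FG G H') := (fst p, bY (snd p)).

(* Infinite streams Y^omega are represented as functions nat -> Y;
   finite words Y^* as lists. *)
Definition hd {Y : Type} (s : nat -> Y) : Y := s 0.
Definition tl {Y : Type} (s : nat -> Y) : nat -> Y := fun n => s (S n).
Definition now {Y S : Type} (sigma : list Y -> S) : S := sigma [].
Definition ltr {Y S : Type} (sigma : list Y -> S) : Y -> list Y -> S :=
  fun y w => sigma (y :: w).

Section Omega.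
Variables (R : Type) (G : Game R).
Local Notation Y := (Mov G).
Local Notation SG := (Sig G).

(* P_omega: P_omega sigma = P_G sigma_0 :: P_omega (fun z => sigma (P_G sigma_0 :: z)),
   computed coordinatewise. *)
Fixpoint Pomega (sigma : list Y -> SG) (n : nat) : Y :=
  match n with
  | O => play G (sigma [])
  | S m => Pomega (fun z => sigma (play G (sigma []) :: z)) m
  end.

Definition Phi (Gam : ((nat -> Y) -> R) -> (list Y -> SG) -> Prop)
  (k : (nat -> Y) -> R) (sigma : list Y -> SG) : Prop :=
  eqm G (fun y => k (fun n => match n with O => y | S m => Pomega (ltr sigma y) m end))
        (now sigma) /\
  forall y', Gam (fun z => k (fun n => match n with O => y' | S m => z m end))
                 (ltr sigma y').

(* Greatest fixed point of Phi (Knaster-Tarski: union of all post-fixed points). *)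
Definition Eomega (k : (nat -> Y) -> R) (sigma : list Y -> SG) : Prop :=
  exists Gam : ((nat -> Y) -> R) -> (list Y -> SG) -> Prop,
    (forall k' s', Gam k' s' -> Phi Gam k' s') /\ Gam k sigma.

Definition Gomega : Game R := @mkGame R (list Y -> SG) (nat -> Y) Pomega Eomega.
End Omega.

Definition omega_coalgS {R : Type} (G : Game R) (sigma : Sig (Gomega G))
  : Sig (FG G (Gomega G)) := (now sigma, ltr sigma).
Definition omega_coalgY {R : Type} (G : Game R) (s : Mov (Gomega G))
  : Mov (FG G (Gomega G)) := (hd s, tl s).
Arguments omega_coalgS {R} G sigma.
Arguments omega_coalgY {R} G s.
Arguments FG_mapS {R} G {H H'} bS p.
Arguments FG_mapY {R} G {H H'} bY p.

(* Main.v *)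
Require Import Defs.
From Stdlib Require Import List FunctionalExtensionality.
Import ListNotations.

Section Fin.
Variables (R : Type) (G : Game R) (H : Game R)
  (gY : Mov H -> Mov (FG G H)) (gS : Sig H -> Sig (FG G H)).

Fixpoint fbS (w : list (Mov G)) (x : Sig H) : Sig G :=
  match w with [] => fst (gS x) | y :: w' => fbS w' (snd (gS x) y) end.
Fixpoint fbY (n : nat) (h : Mov H) : Mov G :=
  match n with O => fst (gY h) | S m => fbY m (snd (gY h)) end.
Definition bS (x : Sig H) : list (Mov G) -> Sig G := fun w => fbS w x.
Definition bY (h : Mov H) : nat -> Mov G := fun n => fbY n h.

Hypothesis Hm : is_morphism H (FG G H) gY gS.

Lemma play_eq : forall s, bY (play H s) = Pomega G (bS s).
Proof.
  intro s. apply functional_extensionality. intro n. revert s.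
  induction n as [|n IH]; intro s; destruct Hm as [Hp _];
  specialize (Hp s); unfold bY, bS in *; simpl in *.
  - destruct (gS s) as [s0 f] eqn:E. rewrite Hp. reflexivity.
  - destruct (gS s) as [s0 f] eqn:E. rewrite Hp. simpl.
    rewrite IH. simpl. try rewrite E. reflexivity.
Qed.

Lemma bY_unfold : forall y, bY y = (fun n => match n with O => fst (gY y) | S m => bY (snd (gY y)) m end).
Proof. intro y. apply functional_extensionality. intros [|n]; reflexivity. Qed.

Lemma eq_eq : forall s k, eqm H (fun y => k (bY y)) s -> Eomega G k (bS s).
Proof.
  intros s k Hk.
  exists (fun k' sg => exists s, sg = bS s /\ eqm H (fun y => k' (bY y)) s).
  split; [| exists s; split; auto].
  intros k' sg [s' [-> Hs']].
  destruct Hm as [_ He].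
  specialize (He s' (fun p => k' (fun n => match n with O => fst p | S m => bY (snd p) m end))).
  assert (Hs2 := Hs'). 
  assert (Hfun : (fun y => k' (bY y)) = (fun y =>
     k' (fun n => match n with O => fst (gY y) | S m => bY (snd (gY y)) m end))).
  { apply functional_extensionality. intro y. rewrite bY_unfold. reflexivity. }
  rewrite Hfun in Hs'. specialize (He Hs').
  unfold Phi. simpl in He. unfold bS, now, ltr. simpl.
  destruct (gS s') as [s0 f] eqn:E. destruct He as [He1 He2]. split.
  - assert (Hf : (fun y => k' (fun n => match n with O => y | S m => bY (play H (f y)) m end))
       = (fun y => k' (fun n => match n with O => y | S m => Pomega G (fun w => fbS w (f y)) m end))).
    { apply functional_extensionality. intro y. rewrite play_eq. reflexivity. }
    rewrite Hf in He1. exact He1.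
  - intro y'. exists (f y'). split; [reflexivity|]. exact (He2 y').
Qed.
End Fin.

Theorem theorem16 (R : Type) (G : Game R) :
  is_morphism (Gomega G) (FG G (Gomega G)) (omega_coalgY G) (omega_coalgS G) /\
  forall (H : Game R) (gY : Mov H -> Mov (FG G H)) (gS : Sig H -> Sig (FG G H)),
    is_morphism H (FG G H) gY gS ->
    exists (bY : Mov H -> Mov (Gomega G)) (bS : Sig H -> Sig (Gomega G)),
      (is_morphism H (Gomega G) bY bS /\
       (fun x => omega_coalgY G (bY x)) = (fun x => FG_mapY G bY (gY x)) /\
       (fun x => omega_coalgS G (bS x)) = (fun x => FG_mapS G bS (gS x))) /\
      forall (bY' : Mov H -> Mov (Gomega G)) (bS' : Sig H -> Sig (Gomega G)),
        is_morphism H (Gomega G) bY' bS' ->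
        (fun x => omega_coalgY G (bY' x)) = (fun x => FG_mapY G bY' (gY x)) ->
        (fun x => omega_coalgS G (bS' x)) = (fun x => FG_mapS G bS' (gS x)) ->
        bY' = bY /\ bS' = bS.
Proof.
  split.
  - split.
    + intro s. reflexivity.
    + intros sg k [Gam [Hpost HG]]. simpl.
      destruct (Hpost _ _ HG) as [H1 H2]. split.
      * exact H1.
      * intro y'. exists Gam. split; [exact Hpost| exact (H2 y')].
  - intros H gY gS Hm.
    exists (@bY _ _ _ gY), (@bS _ _ _ gS). split.
    + split; [split|split].
      * intro s. exact (@play_eq _ _ _ gY gS Hm s).
      * intros s k Hk. exact (@eq_eq _ _ _ gY gS Hm s k Hk).
      * reflexivity.
      * reflexivity.
    + intros bY' bS' _ HY HS. split.
      * apply functional_extensionality. intro x.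
        apply functional_extensionality. intro n. revert x.
        induction n as [|n IH]; intro x.
        -- pose proof (f_equal (fun F => fst (F x)) HY) as E. simpl in E.
           exact E.
        -- pose proof (f_equal (fun F => snd (F x) n) HY) as E. simpl in E.
           unfold tl in E. simpl. change (bY' x (S n)) with (Defs.tl (bY' x) n). rewrite E. rewrite IH. reflexivity.
      * apply functional_extensionality. intro x.
        apply functional_extensionality. intro w. revert x.
        induction w as [|y w IH]; intro x.
        -- pose proof (f_equal (fun F => fst (F x)) HS) as E. simpl in E.
           exact E.
        -- pose proof (f_equal (fun F => snd (F x) y w) HS) as E. simpl in E.
           unfold ltr in E. rewrite E. rewrite IH. reflexivity.
Qed.
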